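(* Let $h\colon R\to R'$ be a homomorphism of commutative rings with unit and let $M$ be an at most countable set of monic polynomials in $R[q]$. If $h$ is injective (resp. surjective), then so is the homomorphism $h_M\colon R[q]^M\to R'[q]^{h(M)}$ induced by the map $h_q\colon R[q]\to R'[q]$ obtained by applying $h$ to coefficients.
   Context: $q$ is an indeterminate. For a set $M$ of monic polynomials in $R[q]$, $M^*$ is the multiplicative set generated by $M$, directed by divisibility, and $R[q]^M=\varprojlim_{f\in M^*}R[q]/(f)$. $h(M)=\{h_q(f):f\in M\}$. *)

(* Defs.v *)
From HB Require Import structures.
From mathcomp Require Import all_boot all_order all_algebra.
From Stdlib Require Import ClassicalEpsilon.
Set Implicit Arguments. Unset Strict Implicit. Unset Printing Implicit Defensive.
Import GRing.Theory.
Local Open Scope ring_scope.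

Definition at_most_countable (T : Type) (M : T -> Prop) : Prop :=
  exists e : T -> nat, forall p q, M p -> M q -> e p = e q -> p = q.

Definition Mstar (R : comNzRingType) (M : {poly R} -> Prop) (f : {poly R}) : Prop :=
  exists s : seq {poly R}, (forall p, p \in s -> M p) /\ f = \prod_(p <- s) p.

Definition pdivides (R : comNzRingType) (f g : {poly R}) : Prop :=
  exists k : {poly R}, g = k * f.

(* Elements of R[q]^M = lim_{f in M*} R[q]/(f).  Since every f in M* is monic,
   R[q]/(f) is represented by the canonical remainders (polynomials of size
   < size f); the transition map R[q]/(g) -> R[q]/(f) for f | g is reduction
   mod f.  A family x is encoded as a function {poly R} -> {poly R}, with the
   (irrelevant) values outside M* fixed to 0. *)
Definition in_limit (R : comNzRingType) (M : {poly R} -> Prop)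
    (x : {poly R} -> {poly R}) : Prop :=
  (forall f, ~ Mstar M f -> x f = 0) /\
  (forall f, Mstar M f -> (size (x f) < size f)%N) /\
  (forall f g, Mstar M f -> Mstar M g -> pdivides f g ->
     Pdiv.Ring.rmodp (x g) f = x f).

Definition image_set (R R' : comNzRingType) (h : {rmorphism R -> R'})
    (M : {poly R} -> Prop) : {poly R'} -> Prop :=
  fun g => exists f, M f /\ g = map_poly h f.

(* h_M : R[q]^M -> R'[q]^{h(M)}: the component at g = h_q(f), f in M*, is the
   class of h_q(x_f) mod g (independent of the choice of f). *)
Definition hM (R R' : comNzRingType) (h : {rmorphism R -> R'})
    (M : {poly R} -> Prop) (x : {poly R} -> {poly R}) (g : {poly R'}) : {poly R'} :=
  match excluded_middle_informative
          (exists f, Mstar M f /\ map_poly h f = g) with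
  | left H => Pdiv.Ring.rmodp (map_poly h (x (proj1_sig (constructive_indefinite_description _ H)))) g
  | right _ => 0
  end.

(* Main.v *)
Require Import Defs.
From HB Require Import structures.
From mathcomp Require Import all_boot all_order all_algebra.
From Stdlib Require Import ClassicalEpsilon FunctionalExtensionality.
Set Implicit Arguments. Unset Strict Implicit. Unset Printing Implicit Defensive.
Import GRing.Theory.
Local Open Scope ring_scope.

Lemma mod_mod (R : comNzRingType) (d f p : {poly R}) :
  d \is monic -> f \is monic -> pdivides f d ->
  Pdiv.Ring.rmodp (Pdiv.Ring.rmodp p d) f = Pdiv.Ring.rmodp p f.
Proof.
move=> md mf [k Hk].
rewrite {2}(Pdiv.RingMonic.rdivp_eq md p) (Pdiv.RingMonic.rmodpD mf).
by rewrite [X in _ = _ + X]/= {3}Hk mulrA (Pdiv.RingMonic.rmodp_mull mf) add0r.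
Qed.

Lemma size_map_le (R R' : comNzRingType) (h : {rmorphism R -> R'}) (p : {poly R}) :
  (size (map_poly h p) <= size p)%N.
Proof. by rewrite /map_poly size_poly. Qed.

Lemma size_map_monic (R R' : comNzRingType) (h : {rmorphism R -> R'}) (p : {poly R}) :
  p \is monic -> size (map_poly h p) = size p.
Proof.
move=> /monicP mp; apply: size_map_poly_id0.
by rewrite mp rmorph1 oner_neq0.
Qed.

Lemma map_rmodp (R R' : comNzRingType) (h : {rmorphism R -> R'}) (d p : {poly R}) :
  d \is monic ->
  map_poly h (Pdiv.Ring.rmodp p d) = Pdiv.Ring.rmodp (map_poly h p) (map_poly h d).
Proof.
move=> md.
have mhd : map_poly h d \is monic by apply: monic_map.
rewrite {2}(Pdiv.RingMonic.rdivp_eq md p) rmorphD rmorphM /=.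
rewrite Pdiv.RingMonic.rmodp_addl_mul_small //.
rewrite (size_map_monic h md); apply: leq_ltn_trans (size_map_le h _) _.
by apply: Pdiv.CommonRing.ltn_rmodpN0; apply: monic_neq0.
Qed.

Lemma pdiv_trans (R : comNzRingType) (f g k : {poly R}) :
  pdivides f g -> pdivides g k -> pdivides f k.
Proof. by move=> [a ->] [b ->]; exists (b * a); rewrite mulrA. Qed.

Lemma Mstar_monic (R : comNzRingType) (M : {poly R} -> Prop) f :
  (forall f, M f -> f \is monic) -> Mstar M f -> f \is monic.
Proof. by move=> Mm [s [Hs ->]]; rewrite big_seq; apply: monic_prod => p /Hs; apply: Mm. Qed.
Lemma Mstar_mul (R : comNzRingType) (M : {poly R} -> Prop) f g :
  Mstar M f -> Mstar M g -> Mstar M (f * g).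
Proof.
move=> [s [Hs ->]] [t [Ht ->]]; exists (s ++ t); split; last by rewrite big_cat.
by move=> p; rewrite mem_cat => /orP [/Hs|/Ht].
Qed.

Lemma Mstar1 (R : comNzRingType) (M : {poly R} -> Prop) : Mstar M 1.
Proof. by exists [::]; rewrite big_nil. Qed.

Lemma MstarM (R : comNzRingType) (M : {poly R} -> Prop) f : M f -> Mstar M f.
Proof.
by move=> Mf; exists [:: f]; rewrite big_seq1; split => // p; rewrite inE => /eqP ->.
Qed.

Lemma Mstar_prod (R : comNzRingType) (M : {poly R} -> Prop) (I : Type) (s : seq I) F :
  (forall i, Mstar M (F i)) -> Mstar M (\prod_(i <- s) F i).
Proof.
move=> HF; elim: s => [|i s IH]; first by rewrite big_nil; apply: Mstar1.
by rewrite big_cons; apply: Mstar_mul.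
Qed.

Lemma Mstar_image (R R' : comNzRingType) (h : {rmorphism R -> R'})
    (M : {poly R} -> Prop) g :
  Mstar (image_set h M) g <-> exists f, Mstar M f /\ map_poly h f = g.
Proof.
split.
  move=> [s [Hs Hg]]; rewrite Hg; clear Hg; elim: s Hs => [|p s IH] Hs.
    by exists 1; split; [apply: Mstar1 | rewrite big_nil rmorph1].
  rewrite big_cons; have [|f [Mf <-]] := IH.
    by move=> q qs; apply: Hs; rewrite inE qs orbT.
  have [f0 [M0 ->]] : image_set h M p by apply: Hs; rewrite inE eqxx.
  exists (f0 * f); split; first by apply: Mstar_mul => //; apply: MstarM.
  by rewrite rmorphM.
move=> [f [[s [Hs Hf]] <-]]; rewrite Hf; exists (map (map_poly h) s); split.
  by move=> q /mapP [p ps ->]; exists p; split => //; apply: Hs.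
by rewrite rmorph_prod big_map.
Qed.
Definition qq (R : comNzRingType) (M : {poly R} -> Prop) (e : {poly R} -> nat)
  (j : nat) : {poly R} :=
  match excluded_middle_informative (exists p, M p /\ e p = j) with
  | left H => proj1_sig (constructive_indefinite_description _ H)
  | right _ => 1
  end.

Lemma qq_Mstar (R : comNzRingType) (M : {poly R} -> Prop) e j : Mstar M (qq M e j).
Proof.
rewrite /qq; case: excluded_middle_informative => [H|_]; last exact: Mstar1.
case: constructive_indefinite_description => p [Mp _] /=; exact: MstarM.
Qed.

Lemma qq_e (R : comNzRingType) (M : {poly R} -> Prop) e p :
  (forall p q, M p -> M q -> e p = e q -> p = q) -> M p -> qq M e (e p) = p.
Proof.
move=> inj Mp; rewrite /qq; case: excluded_middle_informative => [H|[]]; last by exists p.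
by case: constructive_indefinite_description => q [Mq eq] /=; apply: inj.
Qed.

Definition mm (R : comNzRingType) (M : {poly R} -> Prop) e (k : nat) : {poly R} :=
  \prod_(j <- CodeSeq.decode k) qq M e j.

Fixpoint GG (R : comNzRingType) (M : {poly R} -> Prop) e (n : nat) : {poly R} :=
  match n with 0 => 1 | n.+1 => GG M e n * mm M e n end.

Lemma GG_Mstar (R : comNzRingType) (M : {poly R} -> Prop) e n : Mstar M (GG M e n).
Proof.
elim: n => [|n IH] /=; first exact: Mstar1.
apply: Mstar_mul => //; apply: Mstar_prod => j; exact: qq_Mstar.
Qed.

Lemma GG_mono (R : comNzRingType) (M : {poly R} -> Prop) e n m :
  (n <= m)%N -> pdivides (GG M e n) (GG M e m).
Proof.
elim: m => [|m IH]; first by rewrite leqn0 => /eqP ->; exists 1; rewrite mul1r.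
rewrite leq_eqVlt => /orP [/eqP ->|]; first by exists 1; rewrite mul1r.
rewrite ltnS => /IH H; apply: pdiv_trans H _; exists (mm M e m) => /=.
by rewrite mulrC.
Qed.

Lemma GG_cofinal (R : comNzRingType) (M : {poly R} -> Prop) e f :
  (forall p q, M p -> M q -> e p = e q -> p = q) ->
  Mstar M f -> exists n, pdivides f (GG M e n).
Proof.
move=> inj [s [Hs Hf]]; exists (CodeSeq.code (map e s)).+1 => /=.
exists (GG M e (CodeSeq.code (map e s))); congr (_ * _).
rewrite Hf /mm CodeSeq.codeK big_map [LHS]big_seq [RHS]big_seq.
by apply: eq_bigr => p ps; apply: qq_e => //; apply: Hs.
Qed.
Lemma size_pdiv (R : comNzRingType) (f g : {poly R}) :
  f \is monic -> g \is monic -> pdivides f g -> (size f <= size g)%N.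
Proof.
move=> mf mg [k Hk].
have k0 : k != 0 by apply: contraTneq mg => k0; rewrite Hk k0 mul0r monicE lead_coef0 eq_sym oner_eq0.
rewrite Hk size_Mmonic //; move: k0; rewrite -size_poly_eq0.
by case: (size k) => // n _; rewrite addSn /= leq_addl.
Qed.

Definition liftp (R R' : comNzRingType) (lift : R' -> R) (p : {poly R'}) : {poly R} :=
  \poly_(i < size p) lift p`_i.

Lemma liftpK (R R' : comNzRingType) (h : {rmorphism R -> R'}) lift p :
  (forall a, h (lift a) = a) -> map_poly h (liftp lift p) = p.
Proof.
move=> hl; apply/polyP => i; rewrite coef_map coef_poly.
by case: ltnP => le; [apply: hl | rewrite nth_default //; exact: raddf0].
Qed.

Lemma size_liftp (R R' : comNzRingType) (lift : R' -> R) p :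
  (size (liftp lift p) <= size p)%N.
Proof. exact: size_poly. Qed.

Fixpoint XX (R R' : comNzRingType) (h : {rmorphism R -> R'}) (lift : R' -> R)
   (y : {poly R'} -> {poly R'}) (M : {poly R} -> Prop) e (n : nat) : {poly R} :=
  match n with
  | 0 => 0
  | n.+1 => let z0 := liftp lift (y (map_poly h (GG M e n.+1))) in
            z0 + (XX h lift y M e n - Pdiv.Ring.rmodp z0 (GG M e n))
  end.

Lemma XX_inv (R R' : comNzRingType) (h : {rmorphism R -> R'}) (lift : R' -> R)
   (y : {poly R'} -> {poly R'}) (M : {poly R} -> Prop) e n :
  (forall a, h (lift a) = a) -> (forall f, M f -> f \is monic) ->
  in_limit (image_set h M) y ->
  [/\ (size (XX h lift y M e n) < size (GG M e n))%N,
      map_poly h (XX h lift y M e n) = y (map_poly h (GG M e n)) &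
      Pdiv.Ring.rmodp (XX h lift y M e n.+1) (GG M e n) = XX h lift y M e n].
Proof.
move=> hl Mm [y0 [ysz ycomp]].
have mG k : GG M e k \is monic by apply: Mstar_monic Mm (GG_Mstar M e k).
have yM k : Mstar (image_set h M) (map_poly h (GG M e k)).
  by apply/Mstar_image; exists (GG M e k); split => //; apply: GG_Mstar.
have small k : (size (XX h lift y M e k) < size (GG M e k))%N ->
    Pdiv.Ring.rmodp (XX h lift y M e k.+1) (GG M e k) = XX h lift y M e k.
  move=> sk /=.
  rewrite (Pdiv.RingMonic.rmodpD (mG k)) (Pdiv.RingMonic.rmodpB (mG k)).
  rewrite (Pdiv.RingMonic.rmodp_id (mG k)) (Pdiv.CommonRing.rmodp_small sk).
  by rewrite addrC subrK.
suff [H1 H2] : (size (XX h lift y M e n) < size (GG M e n))%N /\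
      map_poly h (XX h lift y M e n) = y (map_poly h (GG M e n)).
  by split => //; apply: small.
elim: n => [|n [IH1 IH2]].
  rewrite /= rmorph0 rmorph1; split; first by rewrite size_poly0 size_poly1.
  have := ysz 1 (Mstar1 _); rewrite size_poly1 ltnS size_poly_leq0 => /eqP.
  by move=> ->.
have dG : pdivides (GG M e n) (GG M e n.+1) by apply: GG_mono.
set z0 := liftp lift (y (map_poly h (GG M e n.+1))).
have -> : XX h lift y M e n.+1 = z0 + (XX h lift y M e n - Pdiv.Ring.rmodp z0 (GG M e n)) by [].
split.
  have sz0 : (size z0 < size (GG M e n.+1))%N.
    apply: leq_ltn_trans (size_liftp _ _) _.
    by rewrite -(size_map_monic h (mG n.+1)); apply: ysz.
  have sG := size_pdiv (mG n) (mG n.+1) dG.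
  apply: leq_ltn_trans (size_polyD _ _) _; rewrite gtn_max sz0 /=.
  apply: leq_ltn_trans (size_polyD _ _) _; rewrite gtn_max size_polyN.
  rewrite (leq_trans IH1 sG) /=; apply: leq_trans sG.
  by apply: Pdiv.CommonRing.ltn_rmodpN0; apply: monic_neq0.
rewrite rmorphD rmorphB /= IH2 map_rmodp // liftpK //.
rewrite ycomp //; first by rewrite subrr addr0.
by case: dG => k Hk; exists (map_poly h k); rewrite Hk rmorphM.
Qed.
Lemma XX_mod (R R' : comNzRingType) (h : {rmorphism R -> R'}) (lift : R' -> R)
   (y : {poly R'} -> {poly R'}) (M : {poly R} -> Prop) e n m :
  (forall a, h (lift a) = a) -> (forall f, M f -> f \is monic) ->
  in_limit (image_set h M) y -> (n <= m)%N ->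
  Pdiv.Ring.rmodp (XX h lift y M e m) (GG M e n) = XX h lift y M e n.
Proof.
move=> hl Mm yl.
have mG k : GG M e k \is monic by apply: Mstar_monic Mm (GG_Mstar M e k).
elim: m => [|m IH].
  rewrite leqn0 => /eqP ->; have [s _ _] := XX_inv e 0 hl Mm yl.
  exact: (Pdiv.CommonRing.rmodp_small s).
rewrite leq_eqVlt => /orP [/eqP ->|].
  have [s _ _] := XX_inv e m.+1 hl Mm yl.
  exact: (Pdiv.CommonRing.rmodp_small s).
rewrite ltnS => le.
rewrite -(mod_mod _ (mG m) (mG n) (GG_mono M e le)).
by have [_ _ ->] := XX_inv e m hl Mm yl; apply: IH.
Qed.

Definition xx (R R' : comNzRingType) (h : {rmorphism R -> R'}) (lift : R' -> R)
   (y : {poly R'} -> {poly R'}) (M : {poly R} -> Prop) e (f : {poly R}) : {poly R} :=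
  match excluded_middle_informative (Mstar M f /\ exists n, pdivides f (GG M e n)) with
  | left H => Pdiv.Ring.rmodp
                (XX h lift y M e (proj1_sig (constructive_indefinite_description _ (proj2 H)))) f
  | right _ => 0
  end.

Lemma xx_spec (R R' : comNzRingType) (h : {rmorphism R -> R'}) (lift : R' -> R)
   (y : {poly R'} -> {poly R'}) (M : {poly R} -> Prop) e f n :
  (forall a, h (lift a) = a) -> (forall f, M f -> f \is monic) ->
  in_limit (image_set h M) y ->
  Mstar M f -> pdivides f (GG M e n) ->
  xx h lift y M e f = Pdiv.Ring.rmodp (XX h lift y M e n) f.
Proof.
move=> hl Mm yl Mf dn.
have mG k : GG M e k \is monic by apply: Mstar_monic Mm (GG_Mstar M e k).
have mf := Mstar_monic Mm Mf.
have key a b : (a <= b)%N -> pdivides f (GG M e a) ->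
    Pdiv.Ring.rmodp (XX h lift y M e a) f = Pdiv.Ring.rmodp (XX h lift y M e b) f.
  move=> ab da; rewrite -(XX_mod e hl Mm yl ab) mod_mod //.
rewrite /xx; case: excluded_middle_informative => [H|[]]; last by split => //; exists n.
case: constructive_indefinite_description => m dm /=.
case: (leqP m n) => mn; first exact: key.
by symmetry; apply: key => //; apply: ltnW.
Qed.

Theorem lemma3p1 (R R' : comNzRingType) (h : {rmorphism R -> R'})
    (M : {poly R} -> Prop)
    (Mmonic : forall f, M f -> f \is monic)
    (Mcount : at_most_countable M) :
  (injective h ->
     forall x1 x2, in_limit M x1 -> in_limit M x2 ->
       hM h M x1 = hM h M x2 -> x1 = x2) /\
  ((forall y : R', exists a : R, h a = y) ->
     forall y, in_limit (image_set h M) y ->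
       exists x, in_limit M x /\ hM h M x = y).
Proof.
split.
  move=> hinj x1 x2 [z1 [s1 c1]] [z2 [s2 c2]] eqh.
  apply: functional_extensionality => f.
  case: (excluded_middle_informative (Mstar M f)) => Mf; last by rewrite z1 ?z2.
  have hinjp : injective (map_poly h) by apply: map_inj_poly => //; apply: raddf0.
  have E (x : {poly R} -> {poly R}) :
      (forall f, Mstar M f -> (size (x f) < size f)%N) ->
      hM h M x (map_poly h f) = map_poly h (x f).
    move=> sx; rewrite /hM; case: excluded_middle_informative => [H|[]]; last by exists f.
    case: constructive_indefinite_description => f' [Mf' ef'] /=.
    have ff : f' = f by apply: hinjp.
    rewrite ff in Mf' *; rewrite Pdiv.CommonRing.rmodp_small //.
    rewrite (size_map_monic h (Mstar_monic Mmonic Mf)).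
    exact: leq_ltn_trans (size_map_le h _) (sx _ Mf').
  by apply: hinjp; rewrite -(E _ s1) -(E _ s2) eqh.
move=> hsurj y yl.
pose lift a := proj1_sig (constructive_indefinite_description _ (hsurj a)).
have hl a : h (lift a) = a by rewrite /lift; case: constructive_indefinite_description.
have [e einj] := Mcount.
have mG k : GG M e k \is monic by apply: Mstar_monic Mmonic (GG_Mstar M e k).
have yl' := yl; case: yl' => [y0 [ysz ycomp]].
exists (xx h lift y M e); split; first split.
- move=> f Mf; rewrite /xx; case: excluded_middle_informative => [H|//].
  by case: Mf; case: H.
- split.
    move=> f Mf; have [n dn] := GG_cofinal einj Mf.
    rewrite (xx_spec hl Mmonic yl Mf dn).
    by apply: Pdiv.CommonRing.ltn_rmodpN0; apply: monic_neq0; apply: Mstar_monic Mmonic Mf.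
  move=> f g Mf Mg dfg; have [n dn] := GG_cofinal einj Mg.
  rewrite (xx_spec hl Mmonic yl Mg dn).
  rewrite (xx_spec hl Mmonic yl Mf (pdiv_trans dfg dn)).
  by apply: mod_mod => //; apply: Mstar_monic Mmonic _.
apply: functional_extensionality => g.
rewrite /hM; case: excluded_middle_informative => [H|nH]; last first.
  by rewrite y0 // => /Mstar_image.
case: constructive_indefinite_description => f [Mf ef] /=; subst g.
have mf := Mstar_monic Mmonic Mf.
have [n dn] := GG_cofinal einj Mf.
have yMf : Mstar (image_set h M) (map_poly h f) by apply/Mstar_image; exists f.
rewrite (xx_spec hl Mmonic yl Mf dn) map_rmodp //.
have [_ -> _] := XX_inv e n hl Mmonic yl.
rewrite ycomp //.
- by rewrite Pdiv.CommonRing.rmodp_small //; apply: ysz.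
- by apply/Mstar_image; exists (GG M e n); split => //; apply: GG_Mstar.
- by case: dn => k ->; exists (map_poly h k); rewrite rmorphM.
Qed.
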